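(* Let $h$ be an isometry of the Urysohn metric space $\mathbb U$ and let $\delta>0$. Then for every finite $\mathbf A\subseteq\mathbb U$ there is an isometry $f$ of $\mathbb U$ such that $d(f(a),h(a))\leq\delta$ for all $a\in\mathbf A$, while $d(a,f(b))\geq\delta$ for all $a,b\in\mathbf A$.
   Context: The Urysohn metric space $\mathbb U$ is, up to isometry, the unique complete separable metric space such that every isometric embedding of a finite metric space $\mathbf A$ into $\mathbb U$ extends to any one-point metric extension $\mathbf A\cup\{y\}$ of $\mathbf A$. *)

(* Defs.v *)
From Stdlib Require Export Reals List.
Open Scope R_scope.
Set Implicit Arguments.
Unset Strict Implicit.

Definition is_metric (T : Type) (d : T -> T -> R) : Prop :=
  (forall x y, 0 <= d x y) /\
  (forall x y, d x y = 0 <-> x = y) /\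
  (forall x y, d x y = d y x) /\
  (forall x y z, d x z <= d x y + d y z).

Definition cauchy_seq (T : Type) (d : T -> T -> R) (u : nat -> T) : Prop :=
  forall eps, 0 < eps -> exists N, forall m n, (N <= m)%nat -> (N <= n)%nat ->
    d (u m) (u n) < eps.

Definition converges_to (T : Type) (d : T -> T -> R) (u : nat -> T) (l : T) : Prop :=
  forall eps, 0 < eps -> exists N, forall n, (N <= n)%nat -> d (u n) l < eps.

Definition complete_metric (T : Type) (d : T -> T -> R) : Prop :=
  forall u : nat -> T, cauchy_seq d u -> exists l, converges_to d u l.

Definition separable_metric (T : Type) (d : T -> T -> R) : Prop :=
  exists s : nat -> T, forall x eps, 0 < eps -> exists n, d (s n) x < eps.

(* One-point extension property: a one-point metric extension A ∪ {y} of a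
   finite subset A (listed by the list A) is determined by the distances
   r a = d(a,y) (a in A), which must be positive (y is a new point) and make
   A ∪ {y} a metric space (triangle inequalities). *)
Definition one_point_extension_property (T : Type) (d : T -> T -> R) : Prop :=
  forall (A : list T) (r : T -> R),
    (forall a, In a A -> 0 < r a) ->
    (forall a b, In a A -> In b A ->
        d a b <= r a + r b /\ r a <= d a b + r b) ->
    exists z : T, forall a, In a A -> d a z = r a.

Definition is_urysohn (T : Type) (d : T -> T -> R) : Prop :=
  is_metric d /\ complete_metric d /\ separable_metric d /\
  one_point_extension_property d.

Definition isometry (T : Type) (d : T -> T -> R) (f : T -> T) : Prop :=
  (forall y, exists x, f x = y) /\ (forall x y, d (f x) (f y) = d x y).

(* Main.v *)
Require Import Defs.
From Stdlib Require Import Reals List Lra Lia Classical ClassicalEpsilon.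
Open Scope R_scope.

Section U.
Variable T : Type.
Variable d : T -> T -> R.
Hypothesis HU : is_urysohn d.

Lemma dpos x y : 0 <= d x y. Proof. apply (proj1 (proj1 HU)). Qed.
Lemma deq0 x y : d x y = 0 -> x = y. Proof. apply (proj1 (proj2 (proj1 HU))). Qed.
Lemma dxx x : d x x = 0. Proof. apply (proj1 (proj2 (proj1 HU))); auto. Qed.
Lemma dsym x y : d x y = d y x. Proof. apply (proj2 (proj2 (proj1 HU))). Qed.
Lemma dtri x y z : d x z <= d x y + d y z. Proof. apply (proj2 (proj2 (proj1 HU))). Qed.
Lemma dneq x y : x <> y -> 0 < d x y.
Proof. intros H. destruct (Rle_lt_or_eq_dec 0 (d x y) (dpos x y)); auto.
 exfalso; apply H, deq0; auto. Qed.

Definition good (L : list (T*T)) := forall p q, In p L -> In q L ->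
  d (fst p) (fst q) = d (snd p) (snd q).

Fixpoint rlook (x : T) (L : list (T*T)) (b : T) : R :=
  match L with nil => 0
  | p :: L' => if excluded_middle_informative (snd p = b) then d x (fst p) else rlook x L' b end.

Lemma rlook_spec x L b : In b (map snd L) -> exists a, In (a,b) L /\ rlook x L b = d x a.
Proof.
 induction L as [|p L IH]; simpl; [tauto|]. intros H.
 destruct (excluded_middle_informative (snd p = b)) as [e|n].
 - exists (fst p); split; auto. left; destruct p; simpl in *; subst; auto.
 - destruct H as [H|H]; [contradiction|]. destruct (IH H) as [a [Ha Hr]]. exists a; auto.
Qed.

Lemma forth L x : good L -> exists y, good ((x,y)::L).
Proof.
 intros G.
 destruct (classic (exists y, In (x,y) L)) as [[y Hy]|N].
 - exists y. intros p q [<-|Hp] [<-|Hq]; simpl.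
   + rewrite !dxx; auto.
   + apply (G (x,y) q Hy Hq).
   + apply (G p (x,y) Hp Hy).
   + auto.
 - destruct (proj2 (proj2 (proj2 HU)) (map snd L) (rlook x L)) as [z Hz].
   + intros b Hb. destruct (rlook_spec x L b Hb) as [a [Ha ->]]. apply dneq.
     intros ->. apply N; eauto.
   + intros b b' Hb Hb'. destruct (rlook_spec x L b Hb) as [a [Ha ->]].
     destruct (rlook_spec x L b' Hb') as [a' [Ha' ->]].
     pose proof (G _ _ Ha Ha') as E; simpl in E. rewrite <- E.
     pose proof (dtri a x a'); pose proof (dtri x a' a); rewrite (dsym a x) in *; rewrite (dsym a' a) in *. split; lra.
   + exists z. 
     assert (K : forall a b, In (a,b) L -> d x a = d z b).
     { intros a b Hab. assert (Hb : In b (map snd L)) by (apply in_map_iff; exists (a,b); auto).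
       pose proof (Hz b Hb) as E. destruct (rlook_spec x L b Hb) as [a' [Ha' R']].
       pose proof (G _ _ Hab Ha') as E2; simpl in E2. rewrite dxx in E2.
       apply deq0 in E2; subst a'. rewrite (dsym z b), E, R'; auto. }
     intros p q [<-|Hp] [<-|Hq]; simpl.
     * rewrite !dxx; auto.
     * destruct q as [a b]; simpl; auto.
     * destruct p as [a b]; simpl. rewrite dsym, (dsym b); auto.
     * auto.
Qed.

Definition swap (L : list (T*T)) := map (fun p => (snd p, fst p)) L.
Lemma swap_swap L : swap (swap L) = L.
Proof. induction L as [|[a b] L IH]; simpl; [auto| unfold swap in *; simpl; rewrite IH; auto]. Qed.
Lemma good_swap L : good L -> good (swap L).
Proof. intros G p q Hp Hq. unfold swap in *. apply in_map_iff in Hp as [p' [<- Hp]].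
 apply in_map_iff in Hq as [q' [<- Hq]]. simpl; symmetry; auto. Qed.

Lemma back L y : good L -> exists x, good ((x,y)::L).
Proof. intros G. destruct (forth (swap L) y (good_swap L G)) as [x Hx].
 exists x. apply good_swap in Hx. simpl in Hx. rewrite swap_swap in Hx. auto. Qed.


Lemma small_inv eps : 0 < eps -> exists N, forall n, (N <= n)%nat -> / INR (S n) < eps.
Proof.
 intros He. destruct (archimed_cor1 eps He) as [N [H1 H2]]. exists N. intros n Hn.
 apply Rle_lt_trans with (/ INR N); auto. apply Rinv_le_contravar.
 apply lt_0_INR; auto. apply le_INR. auto.
Qed.

Section Gen.
Variable P : T -> T -> Prop.
Hypothesis Pgood : forall a b a' b', P a b -> P a' b' -> d a a' = d b b'.
Hypothesis Pdense : forall x eps, 0 < eps -> exists a b, P a b /\ d a x < eps.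

Definition Q x y := forall a b, P a b -> d x a = d y b.

Lemma Q_iso x y x' y' : Q x y -> Q x' y' -> d x x' = d y y'.
Proof.
 intros H H'.
 assert (K : forall eps, 0 < eps -> d x x' <= d y y' + eps /\ d y y' <= d x x' + eps).
 { intros eps He. destruct (Pdense x (eps/4)) as [a [b [Pab Ha]]]; [lra|].
   destruct (Pdense x' (eps/4)) as [a' [b' [Pab' Ha']]]; [lra|].
   pose proof (H a b Pab). pose proof (H' a' b' Pab'). pose proof (Pgood _ _ _ _ Pab Pab').
   pose proof (dtri x a x'). pose proof (dtri a a' x'). pose proof (dtri b y b').
   pose proof (dtri y y' b'). pose proof (dtri y b y'). pose proof (dtri b b' y').
   pose proof (dtri a x a'). pose proof (dtri x x' a').
   rewrite (dsym a x) in *. rewrite (dsym a' x') in *. rewrite (dsym b y) in *. rewrite (dsym b' y') in *.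
   split; lra. }
 apply Rle_antisym; apply Rle_plus_epsilon; intros; apply K; auto.
Qed.

Lemma Q_ex x : exists y, Q x y.
Proof.
 assert (E : forall n : nat, exists p : T * T, P (fst p) (snd p) /\ d (fst p) x < / INR (S n)).
 { intros n. destruct (Pdense x (/ INR (S n))) as [a [b [H1 H2]]].
   apply Rinv_0_lt_compat, lt_0_INR; lia. exists (a,b); auto. }
 pose (ps n := proj1_sig (constructive_indefinite_description _ (E n))).
 assert (Hps : forall n, P (fst (ps n)) (snd (ps n)) /\ d (fst (ps n)) x < / INR (S n)).
 { intros n. exact (proj2_sig (constructive_indefinite_description _ (E n))). }
 destruct (proj1 (proj2 HU) (fun n => snd (ps n))) as [y Hy].
 - intros eps He. destruct (small_inv (eps/2)) as [N HN]; [lra|]. exists N. intros m n Hm Hn.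
   destruct (Hps m) as [Pm Dm]. destruct (Hps n) as [Pn Dn].
   rewrite <- (Pgood _ _ _ _ Pm Pn). pose proof (HN m Hm). pose proof (HN n Hn).
   pose proof (dtri (fst (ps m)) x (fst (ps n))). rewrite (dsym x (fst (ps n))) in *. lra.
 - exists y. intros a b Pab.
   assert (K : forall eps, 0 < eps -> d x a <= d y b + eps /\ d y b <= d x a + eps).
   { intros eps He. destruct (small_inv (eps/2)) as [N1 HN1]; [lra|].
     destruct (Hy (eps/2)) as [N2 HN2]; [lra|].
     pose (n := (N1 + N2)%nat). destruct (Hps n) as [Pn Dn].
     pose proof (HN1 n ltac:(unfold n; lia)). pose proof (HN2 n ltac:(unfold n; lia)).
     pose proof (Pgood _ _ _ _ Pn Pab).
     pose proof (dtri x (fst (ps n)) a). pose proof (dtri y (snd (ps n)) b).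
     pose proof (dtri (fst (ps n)) x a). pose proof (dtri (snd (ps n)) y b).
     rewrite (dsym x (fst (ps n))) in *. rewrite (dsym y (snd (ps n))) in *.
     split; lra. }
   apply Rle_antisym; apply Rle_plus_epsilon; intros; apply K; auto.
Qed.
End Gen.


Lemma Fex L x : exists y, good L -> good ((x,y)::L).
Proof. destruct (classic (good L)) as [G|G].
 - destruct (forth L x G) as [y Hy]; eauto.
 - exists x; tauto. Qed.
Lemma Bex L y : exists x, good L -> good ((x,y)::L).
Proof. destruct (classic (good L)) as [G|G].
 - destruct (back L y G) as [x Hx]; eauto.
 - exists y; tauto. Qed.
Definition Ff L x := proj1_sig (constructive_indefinite_description _ (Fex L x)).
Definition Bb L y := proj1_sig (constructive_indefinite_description _ (Bex L y)).
Lemma Ff_spec L x : good L -> good ((x, Ff L x)::L).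
Proof. exact (proj2_sig (constructive_indefinite_description _ (Fex L x))). Qed.
Lemma Bb_spec L y : good L -> good ((Bb L y, y)::L).
Proof. exact (proj2_sig (constructive_indefinite_description _ (Bex L y))). Qed.

Section Seq.
Variable s : nat -> T.
Hypothesis Hs : forall x eps, 0 < eps -> exists n, d (s n) x < eps.
Variable L0 : list (T*T).
Hypothesis HL0 : good L0.

Fixpoint Lseq n := match n with 0%nat => L0
 | S n => let L1 := (s n, Ff (Lseq n) (s n)) :: Lseq n in (Bb L1 (s n), s n) :: L1 end.

Lemma Lseq_good n : good (Lseq n).
Proof. induction n; simpl; auto. apply Bb_spec, Ff_spec; auto. Qed.

Lemma Lseq_mono n m p : (n <= m)%nat -> In p (Lseq n) -> In p (Lseq m).
Proof. intros Hle Hp. induction Hle; auto. simpl. right; right; auto. Qed.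

Definition PP a b := exists n, In (a,b) (Lseq n).

Lemma PP_good a b a' b' : PP a b -> PP a' b' -> d a a' = d b b'.
Proof. intros [n Hn] [m Hm]. apply (Lseq_good (max n m) (a,b) (a',b')).
 apply (Lseq_mono n); auto; lia. apply (Lseq_mono m); auto; lia. Qed.

Lemma PP_dense x eps : 0 < eps -> exists a b, PP a b /\ d a x < eps.
Proof. intros He. destruct (Hs x eps He) as [n Hn]. exists (s n), (Ff (Lseq n) (s n)).
 split; auto. exists (S n). simpl; auto. Qed.

Lemma PP_dense' y eps : 0 < eps -> exists b a, PP a b /\ d b y < eps.
Proof. intros He. destruct (Hs y eps He) as [n Hn]. exists (s n).
 eexists. split; eauto. exists (S n). simpl; auto. Qed.

Lemma homog_seq : exists f, isometry d f /\ forall a b, In (a,b) L0 -> f a = b.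
Proof.
 pose (P' := fun b a => PP a b).
 assert (G' : forall a b a' b', P' a b -> P' a' b' -> d a a' = d b b').
 { intros. symmetry; apply PP_good; auto. }
 assert (D' : forall x eps, 0 < eps -> exists a b, P' a b /\ d a x < eps).
 { intros x eps He; destruct (PP_dense' x eps He) as [b [a [H1 H2]]]. exists b, a; auto. }
 pose (f x := proj1_sig (constructive_indefinite_description _ (Q_ex PP PP_good PP_dense x))).
 assert (Hf : forall x, Q PP x (f x)).
 { intros x. exact (proj2_sig (constructive_indefinite_description _ (Q_ex PP PP_good PP_dense x))). }
 assert (Uq : forall x y, Q PP x y -> f x = y).
 { intros x y Hq. apply deq0. rewrite <- (Q_iso PP PP_good PP_dense _ _ _ _ (Hf x) Hq). apply dxx. }
 exists f. split; [split|].
 - intros y. destruct (Q_ex P' G' D' y) as [x Hx]. exists x. apply Uq.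
   intros a b Pab. symmetry. apply (Hx b a Pab).
 - intros x y. symmetry. apply Q_iso with PP; auto using PP_good, PP_dense.
 - intros a b Hab. apply Uq. intros a' b' Pab'. apply PP_good; auto. exists 0%nat; auto.
Qed.
End Seq.

Lemma homog L0 : good L0 -> exists f, isometry d f /\ forall a b, In (a,b) L0 -> f a = b.
Proof. intros G. destruct (proj1 (proj2 (proj2 HU))) as [s Hs]. apply homog_seq with s; auto. Qed.

End U.
Lemma buildM (T : Type) (d : T -> T -> R) (HU : is_urysohn d)
  (h : T -> T) (Hh : isometry d h) (delta : R) (Hdelta : 0 < delta) (C : list T)
  (K : list T) (HK : forall a, In a K -> In (h a) C) :
  exists M, good T d M /\
   (forall a b y, In (a,b) M -> In y C -> d b y = delta + d (h a) y) /\
   (forall a, In a K -> exists b, In (a,b) M).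
Proof.
 assert (Hh2 : forall x y, d (h x) (h y) = d x y) by apply Hh.
 induction K as [|a K IH].
 - exists nil. split; [intros p q []|split; [intros ? ? ? []|intros ? []]].
 - destruct IH as [M [G [I2 I3]]]. { intros; apply HK; simpl; auto. }
   assert (haC : In (h a) C) by (apply HK; simpl; auto).
   destruct (classic (exists b, In (a,b) M)) as [Ex|NEx].
   + exists M. split; auto. split; auto. intros a0 [<-|H0]; auto.
   + pose (r w := if excluded_middle_informative (In w C) then delta + d (h a) w
                  else d (h a) w - delta).
     assert (notC : forall a' b, In (a',b) M -> ~ In b C).
     { intros a' b Hm Hc. pose proof (I2 _ _ _ Hm Hc). rewrite (dxx _ _ HU) in H; auto.
       pose proof (dpos _ _ HU (h a') b). lra. }
     assert (rC : forall w, In w C -> r w = delta + d (h a) w).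
     { intros w Hw. unfold r. destruct (excluded_middle_informative (In w C)); tauto. }
     assert (rM : forall a' b, In (a',b) M -> r b = d a' a).
     { intros a' b Hm. unfold r. destruct (excluded_middle_informative (In b C)) as [c|c].
       - exfalso; eapply notC; eauto.
       - rewrite (dsym _ _ HU (h a) b), (I2 _ _ _ Hm haC), Hh2. ring. }
     assert (Hin : forall w, In w (C ++ map snd M) -> In w C \/ exists a', In (a',w) M).
     { intros w Hw. apply in_app_iff in Hw as [Hw|Hw]; auto. right.
       apply in_map_iff in Hw as [[a' b] [E Hp]]. simpl in E; subst. eauto. }
     destruct (proj2 (proj2 (proj2 HU)) (C ++ map snd M) r) as [z Hz].
     * intros w Hw. destruct (Hin w Hw) as [Hc|[a' Hm]].
       -- rewrite rC; auto. pose proof (dpos _ _ HU (h a) w). lra.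
       -- rewrite (rM _ _ Hm). apply (dneq _ _ HU); auto. intros ->. apply NEx; eauto.
     * intros u v Hu Hv.
       destruct (Hin u Hu) as [Cu|[a1 Mu]]; destruct (Hin v Hv) as [Cv|[a2 Mv]].
       -- rewrite !rC; auto. pose proof (dtri _ _ HU u (h a) v). pose proof (dtri _ _ HU (h a) v u).
          rewrite (dsym _ _ HU u (h a)) in *. rewrite (dsym _ _ HU v u) in *. split; lra.
       -- rewrite rC, (rM _ _ Mv); auto. rewrite (dsym _ _ HU u v), (I2 _ _ _ Mv Cu).
          rewrite <- (Hh2 a2 a). pose proof (dtri _ _ HU (h a2) (h a) u). pose proof (dtri _ _ HU (h a) (h a2) u).
          rewrite (dsym _ _ HU (h a2) (h a)) in *. split; lra.
       -- rewrite (rC v), (rM _ _ Mu); auto. rewrite (I2 _ _ _ Mu Cv).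
          rewrite <- (Hh2 a1 a). pose proof (dtri _ _ HU (h a1) (h a) v). pose proof (dtri _ _ HU (h a1) v (h a)).
          rewrite (dsym _ _ HU v (h a)) in *. split; lra.
       -- rewrite (rM _ _ Mu), (rM _ _ Mv). pose proof (G (a1,u) (a2,v) Mu Mv) as Gm; simpl in Gm; rewrite <- Gm.
          pose proof (dtri _ _ HU a1 a a2). pose proof (dtri _ _ HU a1 a2 a).
          rewrite (dsym _ _ HU a a2) in *. split; lra.
     * exists ((a,z)::M).
       assert (Kb : forall a' b, In (a',b) M -> d a a' = d z b).
       { intros a' b Hm. rewrite (dsym _ _ HU z b), Hz, (rM _ _ Hm), (dsym _ _ HU); auto.
         apply in_app_iff; right. apply in_map_iff. exists (a',b); auto. }
       split; [|split].
       -- intros p q [<-|Hp] [<-|Hq]; simpl.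
          ++ rewrite !(dxx _ _ HU); auto.
          ++ destruct q as [a' b]; simpl; auto.
          ++ destruct p as [a' b]; simpl. rewrite (dsym _ _ HU a'), (dsym _ _ HU b). auto.
          ++ auto.
       -- intros a0 b y [E|Hm] Hy.
          ++ injection E as <- <-. rewrite (dsym _ _ HU z y), Hz, rC; auto. apply in_app_iff; auto.
          ++ auto.
       -- intros a0 [<-|H0].
          ++ exists z; simpl; auto.
          ++ destruct (I3 a0 H0) as [b Hb]. exists b; simpl; auto.
Qed.
Theorem mainTheorem15 (T : Type) (d : T -> T -> R) (HU : is_urysohn d)
  (h : T -> T) (Hh : isometry d h) (delta : R) (Hdelta : 0 < delta)
  (A : list T) :
  exists f : T -> T, isometry d f /\
    (forall a, In a A -> d (f a) (h a) <= delta) /\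
    (forall a b, In a A -> In b A -> delta <= d a (f b)).
Proof.
  destruct (buildM T d HU h Hh delta Hdelta (A ++ map h A) A) as [M [G [I2 I3]]].
  { intros a Ha. apply in_app_iff; right; apply in_map; auto. }
  destruct (homog T d HU M G) as [f [If Hf]].
  exists f. split; auto. split.
  - intros a Ha. destruct (I3 a Ha) as [b Hb]. rewrite (Hf _ _ Hb).
    rewrite (I2 _ _ _ Hb), (dxx _ _ HU). lra. apply in_app_iff; right; apply in_map; auto.
  - intros a b Ha Hb. destruct (I3 b Hb) as [c Hc]. rewrite (Hf _ _ Hc).
    rewrite (dsym _ _ HU a c), (I2 _ _ _ Hc). pose proof (dpos _ _ HU (h b) a). lra.
    apply in_app_iff; left; auto.
Qed.
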